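(* Consider the TGSS iteration with data $y^\delta$, $\|y^\delta-y\|\le\delta$, $\delta>0$. Let $k\in\mathbb N_0$ with $\|r_k^\delta\|>\frac{1+\eta}{1-\eta}\delta$. Then $z_k^\delta\in H_>(u_k^\delta,\alpha_k^\delta+\xi_k^\delta)$. If moreover $z_i^\delta\in B_{4\rho}(x_0)$ for all $i\in I_k$ and $z\in B_{4\rho}(x_0)$ satisfies $F(z)=y$, then $u_k^\delta\ne0$, $x_{k+1}^\delta$ is well defined, and $$\|z-x_{k+1}^\delta\|^2\le\|z-z_k^\delta\|^2-\left(\frac{\|r_k^\delta\|\big(\|r_k^\delta\|-\delta-\eta(\|r_k^\delta\|+\delta)\big)}{\|u_k^\delta\|}\right)^2 .$$
   Context: Setting: $\mathcal X,\mathcal Y$ are real Hilbert spaces, $F:\mathcal D(F)\subset\mathcal X\to\mathcal Y$ is continuously Fréchet differentiable with derivative $F'(x)\in\mathcal L(\mathcal X,\mathcal Y)$ and Hilbert-space adjoint $F'(x)^*$; $x_0\in\mathcal X$ and $\rho>0$ satisfy $B_{4\rho}(x_0)\subset\mathcal D(F)$, where $B_r(x)$ is the closed ball of radius $r$ about $x$. Standing assumptions: (A1) $F(x)=y$ has a solution $x_*\in B_\rho(x_0)$; (A2) there is $\eta\in(0,1)$ with $\|F(x)-F(\tilde x)-F'(x)(x-\tilde x)\|\le\eta\|F(x)-F(\tilde x)\|$ for all $x,\tilde x\in B_{4\rho}(x_0)$; (A3) $0<\|F'(x)\|\le c_F$ for all $x\in B_{4\rho}(x_0)$. Data: $y^\delta\in\mathcal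 Y$ with $\|y^\delta-y\|\le\delta$, $\delta\ge0$ ($\delta=0$ means $y^\delta=y$). Notation: for $u\in\mathcal X$, $a\in\mathbb R$, $\xi\ge0$: $H(u,a)=\{x:\langle u,x\rangle=a\}$, $H_>(u,a)=\{x:\langle u,x\rangle>a\}$, $H(u,a,\xi)=\{x:|\langle u,x\rangle-a|\le\xi\}$. $P_C$ is the metric projection onto a nonempty closed convex set $C$. TGSS iteration (for data $y^\delta$, iterates carry superscript $\delta$): fix an integer $K\ge1$; set $x_{-1}^\delta=x_0^\delta=x_0$. For $k=0,1,2,\dots$: choose $\lambda_k^\delta\in[0,1]$ with $\lambda_0^\delta=0$, put $z_k^\delta=x_k^\delta+\lambda_k^\delta(x_k^\delta-x_{k-1}^\delta)$, $r_k^\delta=F(z_k^\delta)-y^\delta$, $u_k^\delta=F'(z_k^\delta)^*r_k^\delta$, $\alpha_k^\delta=\langle u_k^\delta,z_k^\delta\rangle-\|r_k^\delta\|^2$, $\xi_k^\delta=(\delta+\eta(\|r_k^\delta\|+\delta))\|r_k^\delta\|$, $H_k^\delta=H(u_k^\delta,\alpha_k^\delta,\xi_k^\delta)$. Choose a finite index set $I_k\subset\{k-K,\dots,k\}\cap\mathbb N_0$ with $k\in I_k$, written $I_k=\{k_1>\dots>k_s\}$, $k_1=k$; set $p_1=P_{H^\delta_{k_1}}(z_k^\delta)$, $p_j=P_{H^\delta_{k_1}\cap\dots\cap H^\delta_{k_j}}(p_{j-1})$ for $j=2,\dots,s$, and $x_{k+1}^\delta=p_s$. *)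

(* Defs.v *)
From Stdlib Require Import Reals List Sorted.
Import ListNotations.
Open Scope R_scope.

Record HilbertSpace : Type := mkHilbert {
  hcar :> Type;
  hzero : hcar;
  hadd : hcar -> hcar -> hcar;
  hopp : hcar -> hcar;
  hscal : R -> hcar -> hcar;
  hinner : hcar -> hcar -> R;
  hadd_assoc : forall a b c, hadd a (hadd b c) = hadd (hadd a b) c;
  hadd_comm : forall a b, hadd a b = hadd b a;
  hadd_0 : forall a, hadd a hzero = a;
  hadd_opp : forall a, hadd a (hopp a) = hzero;
  hscal_assoc : forall s t a, hscal s (hscal t a) = hscal (s * t) a;
  hscal_1 : forall a, hscal 1 a = a;
  hscal_distr_v : forall s a b, hscal s (hadd a b) = hadd (hscal s a) (hscal s b);
  hscal_distr_s : forall s t a, hscal (s + t) a = hadd (hscal s a) (hscal t a);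
  hinner_sym : forall a b, hinner a b = hinner b a;
  hinner_add : forall a b c, hinner (hadd a b) c = hinner a c + hinner b c;
  hinner_scal : forall s a b, hinner (hscal s a) b = s * hinner a b;
  hinner_pos : forall a, 0 <= hinner a a;
  hinner_def : forall a, hinner a a = 0 -> a = hzero;
  hcomplete : forall u : nat -> hcar,
    (forall eps, eps > 0 -> exists N, forall m n, (N <= m)%nat -> (N <= n)%nat ->
        sqrt (hinner (hadd (u m) (hopp (u n))) (hadd (u m) (hopp (u n)))) < eps) ->
    exists l, forall eps, eps > 0 -> exists N, forall n, (N <= n)%nat ->
        sqrt (hinner (hadd (u n) (hopp l)) (hadd (u n) (hopp l))) < eps
}.

Arguments hzero {_}.
Arguments hadd {_} _ _.
Arguments hopp {_} _.
Arguments hscal {_} _ _.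
Arguments hinner {_} _ _.

Definition hsub {X : HilbertSpace} (a b : X) : X := hadd a (hopp b).
Definition hnorm {X : HilbertSpace} (a : X) : R := sqrt (hinner a a).

Definition ball {X : HilbertSpace} (c : X) (r : R) (p : X) : Prop :=
  hnorm (hsub p c) <= r.

Definition strip {X : HilbertSpace} (u : X) (a xi : R) (p : X) : Prop :=
  Rabs (hinner u p - a) <= xi.

Definition halfspace_gt {X : HilbertSpace} (u : X) (a : R) (p : X) : Prop :=
  hinner u p > a.

Definition is_proj {X : HilbertSpace} (C : X -> Prop) (q p : X) : Prop :=
  C p /\ forall c, C c -> hnorm (hsub q p) <= hnorm (hsub q c).

Definition bounded_linear {X Y : HilbertSpace} (A : X -> Y) : Prop :=
  (forall a b, A (hadd a b) = hadd (A a) (A b)) /\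
  (forall s a, A (hscal s a) = hscal s (A a)) /\
  (exists C, forall h, hnorm (A h) <= C * hnorm h).

Definition cont_frechet {X Y : HilbertSpace} (DF : X -> Prop) (F : X -> Y)
  (F' : X -> X -> Y) : Prop :=
  (forall x, DF x -> bounded_linear (F' x)) /\
  (forall x, DF x -> forall eps, eps > 0 -> exists d, d > 0 /\
     forall h, DF (hadd x h) -> hnorm h < d ->
       hnorm (hsub (hsub (F (hadd x h)) (F x)) (F' x h)) <= eps * hnorm h) /\
  (forall x, DF x -> forall eps, eps > 0 -> exists d, d > 0 /\
     forall x', DF x' -> hnorm (hsub x' x) < d ->
       forall h, hnorm (hsub (F' x' h) (F' x h)) <= eps * hnorm h).

Definition is_adjoint {X Y : HilbertSpace} (A : X -> Y) (B : Y -> X) : Prop :=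
  forall h w, hinner (A h) w = hinner h (B w).

Section TGSS.
Context {X Y : HilbertSpace} (F : X -> Y) (Fadj : X -> Y -> X) (yd : Y)
  (delta eta : R) (lam : nat -> R) (x : nat -> X) (I : nat -> list nat).

(* x_{k-1}, with the convention x_{-1} = x_0 *)
Definition tgss_xprev (k : nat) : X :=
  match k with O => x O | S j => x j end.
Definition tgss_z (k : nat) : X :=
  hadd (x k) (hscal (lam k) (hsub (x k) (tgss_xprev k))).
Definition tgss_r (k : nat) : Y := hsub (F (tgss_z k)) yd.
Definition tgss_u (k : nat) : X := Fadj (tgss_z k) (tgss_r k).
Definition tgss_alpha (k : nat) : R :=
  hinner (tgss_u k) (tgss_z k) - (hnorm (tgss_r k)) ^ 2.
Definition tgss_xi (k : nat) : R :=
  (delta + eta * (hnorm (tgss_r k) + delta)) * hnorm (tgss_r k).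
Definition tgss_H (k : nat) : X -> Prop :=
  strip (tgss_u k) (tgss_alpha k) (tgss_xi k).
Definition tgss_Hcap (l : list nat) (p : X) : Prop :=
  forall i, In i l -> tgss_H i p.

(* sequential projections: p_j = P_{H_{k_1} ∩ ... ∩ H_{k_j}}(p_{j-1}) *)
Fixpoint tgss_chain (pre rest : list nat) (p out : X) : Prop :=
  match rest with
  | [] => out = p
  | i :: rest' => exists p', is_proj (tgss_Hcap (pre ++ [i])) p p' /\
                             tgss_chain (pre ++ [i]) rest' p' out
  end.

Definition tgss_step (k : nat) (xn : X) : Prop :=
  tgss_chain [] (I k) (tgss_z k) xn.
End TGSS.

Definition admissible_index_set (K k : nat) (l : list nat) : Prop :=
  hd_error l = Some k /\
  StronglySorted (fun a b => (b < a)%nat) l /\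
  (forall i, In i l -> (k <= i + K)%nat /\ (i <= k)%nat).

(* Main.v *)
Require Import Defs.
From Stdlib Require Import Reals List.
From Stdlib Require Import Lra Psatz ClassicalEpsilon.
Import ListNotations.
Open Scope R_scope.

Lemma abs_le_inv x b : Rabs x <= b -> - b <= x <= b.
Proof. intro H. pose proof (Rle_abs x). pose proof (Rle_abs (-x)). rewrite Rabs_Ropp in *. lra. Qed.

Section Basic.
Context {X : HilbertSpace}.
Implicit Types a b c : X.

Lemma inner0l b : hinner (@hzero X) b = 0.
Proof.
  pose proof (hinner_add X hzero hzero b) as H. rewrite hadd_0 in H. lra.
Qed.
Lemma inner_oppl a b : hinner (hopp a) b = - hinner a b.
Proof.
  pose proof (hinner_add X a (hopp a) b) as H. rewrite hadd_opp, inner0l in H. lra.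
Qed.
Lemma inner_addr a b c : hinner a (hadd b c) = hinner a b + hinner a c.
Proof. rewrite !(hinner_sym X a), hinner_add; auto. Qed.
Lemma inner_oppr a b : hinner a (hopp b) = - hinner a b.
Proof. rewrite !(hinner_sym X a), inner_oppl; auto. Qed.
Lemma inner_scalr s a b : hinner a (hscal s b) = s * hinner a b.
Proof. rewrite !(hinner_sym X a), hinner_scal; auto. Qed.
Lemma inner0r b : hinner b (@hzero X) = 0.
Proof. rewrite hinner_sym; apply inner0l. Qed.

Lemma norm_sq a : hnorm a ^ 2 = hinner a a.
Proof. unfold hnorm. apply pow2_sqrt, hinner_pos. Qed.
Lemma norm_nonneg a : 0 <= hnorm a.
Proof. apply sqrt_pos. Qed.
End Basic.

Ltac expand := unfold hsub; repeat rewrite ?hinner_add, ?inner_oppl, ?hinner_scal,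
   ?inner_addr, ?inner_oppr, ?inner_scalr.
Ltac expand_in H := unfold hsub in H; repeat rewrite ?hinner_add, ?inner_oppl, ?hinner_scal,
   ?inner_addr, ?inner_oppr, ?inner_scalr in H.

Section Basic2.
Context {X : HilbertSpace}.
Implicit Types a b c : X.

Lemma cs2 a b : hinner a b ^ 2 <= hinner a a * hinner b b.
Proof.
  destruct (Req_dec (hinner b b) 0) as [E|E].
  - apply (hinner_def X) in E. subst b. rewrite !inner0r. nra.
  - pose proof (hinner_pos X b). assert (P : hinner b b > 0) by lra.
    set (t := hinner a b / hinner b b).
    pose proof (hinner_pos X (hsub a (hscal t b))) as H0.
    expand_in H0. rewrite (hinner_sym X b a) in H0.
    assert (t * hinner b b = hinner a b) by (unfold t; field; lra).
    nra.
Qed.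

Lemma cs a b : Rabs (hinner a b) <= hnorm a * hnorm b.
Proof.
  pose proof (cs2 a b). rewrite <- !norm_sq in H.
  pose proof (norm_nonneg a); pose proof (norm_nonneg b).
  apply Rnot_lt_le; intro C.
  assert (hinner a b ^ 2 = Rabs (hinner a b) ^ 2) by (rewrite <- pow2_abs; auto).
  assert (hnorm a ^ 2 * hnorm b ^ 2 = (hnorm a * hnorm b)^2) by ring.
  assert (0 <= hnorm a * hnorm b) by (apply Rmult_le_pos; auto).
  set (p := hnorm a * hnorm b) in *. set (q := Rabs (hinner a b)) in *. nra.
Qed.

Lemma norm_sub_expand a b : hnorm (hsub a b) ^ 2 = hinner a a - 2 * hinner a b + hinner b b.
Proof. rewrite norm_sq. expand. rewrite (hinner_sym X b a). ring. Qed.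

Lemma tri a b c : hnorm (hsub a c) <= hnorm (hsub a b) + hnorm (hsub b c).
Proof.
  pose proof (cs (hsub a b) (hsub b c)) as H.
  assert (E : hnorm (hsub a c) ^2 = hnorm (hsub a b)^2 + 2 * hinner (hsub a b) (hsub b c) + hnorm (hsub b c)^2).
  { rewrite !norm_sub_expand. expand. ring. }
  pose proof (norm_nonneg (hsub a c)); pose proof (norm_nonneg (hsub a b)); pose proof (norm_nonneg (hsub b c)).
  apply abs_le_inv in H.
  nra.
Qed.
End Basic2.

Section Proj.
Context {X : HilbertSpace}.
Implicit Types a b c p q : X.

Definition convex (C : X -> Prop) := forall a b t, C a -> C b -> 0 <= t <= 1 ->
  C (hadd a (hscal t (hsub b a))).
Definition closed (C : X -> Prop) := forall (s : nat -> X) l, (forall n, C (s n)) ->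
  (forall eps, eps > 0 -> exists N, forall n, (N <= n)%nat -> hnorm (hsub (s n) l) < eps) -> C l.

Lemma sq_le_of_le u v : 0 <= u -> u <= v -> u ^ 2 <= v ^ 2.
Proof. intros; nra. Qed.

Lemma proj_vi C q p c : convex C -> is_proj C q p -> C c ->
  hnorm (hsub c p) ^ 2 <= hnorm (hsub c q) ^ 2 - hnorm (hsub q p) ^ 2.
Proof.
  intros Hc [Hp Hmin] Hcc.
  set (A := hinner (hsub q p) (hsub c p)).
  set (B := hinner (hsub c p) (hsub c p)).
  assert (Hq : forall t, 0 < t <= 1 -> 2 * t * A <= t * t * B).
  { intros t Ht.
    pose proof (Hmin _ (Hc p c t Hp Hcc ltac:(lra))) as H.
    apply sq_le_of_le in H; [|apply norm_nonneg].
    rewrite !norm_sq in H. unfold A, B. expand_in H. expand.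
    rewrite (hinner_sym X p q), (hinner_sym X c q), (hinner_sym X c p) in *. nra. }
  assert (HA : A <= 0).
  { pose proof (hinner_pos X (hsub c p)) as HB. fold B in HB.
    destruct (Rle_or_lt A 0) as [|HA]; auto.
    destruct (Req_dec B 0) as [E|E].
    - specialize (Hq 1 ltac:(lra)). rewrite E in Hq. lra.
    - destruct (Rle_or_lt 1 (A / B)) as [H1|H1].
      + specialize (Hq 1 ltac:(lra)).
        assert (B <= A) by (apply Rmult_le_reg_r with (/ B); [apply Rinv_0_lt_compat; lra|];
          rewrite Rinv_r by lra; exact H1).
        lra.
      + assert (0 < A / B) by (apply Rdiv_lt_0_compat; lra).
        specialize (Hq (A / B) ltac:(lra)).
        assert (A / B * B = A) by (field; lra). nra. }
  rewrite !norm_sq. unfold A, B in *. expand_in HA. expand.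
  rewrite (hinner_sym X p q), (hinner_sym X c q), (hinner_sym X c p) in *. lra.
Qed.
End Proj.

Section Ex.
Context {X : HilbertSpace}.

Lemma inv_S_le N n : (0 < N)%nat -> (N <= n)%nat -> / INR (S n) <= / INR N.
Proof.
  intros H1 H2. apply Rinv_le_contravar. apply lt_0_INR; auto.
  apply le_INR; lia.
Qed.

Lemma inv_S_pos n : 0 < / INR (S n).
Proof. apply Rinv_0_lt_compat, lt_0_INR; lia. Qed.

Lemma proj_exists (C : X -> Prop) q : (exists c, C c) -> convex C -> closed C ->
  exists p, is_proj C q p.
Proof.
  intros [c0 Hc0] Hcv Hcl.
  set (E := fun v => exists c, C c /\ v = - hnorm (hsub q c) ^ 2).
  assert (Hb : bound E).
  { exists 0. intros v [c [_ ->]]. pose proof (norm_nonneg (hsub q c)). nra. }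
  destruct (completeness E Hb (ex_intro _ _ (ex_intro _ c0 (conj Hc0 eq_refl)))) as [m [Hub Hlub]].
  set (d2 := - m).
  assert (Hlow : forall c, C c -> d2 <= hnorm (hsub q c) ^ 2).
  { intros c Hc. assert (E (- hnorm (hsub q c) ^ 2)) by (exists c; auto).
    apply Hub in H. unfold d2; lra. }
  assert (Happ : forall n, exists c, C c /\ hnorm (hsub q c) ^ 2 < d2 + / INR (S n)).
  { intro n. pose proof (inv_S_pos n).
    apply Classical_Prop.NNPP. intro Hn.
    assert (is_upper_bound E (m - / INR (S n))).
    { intros v [c [Hc ->]]. apply Rnot_lt_le. intro Hlt.
      apply Hn. exists c. split; auto. unfold d2; lra. }
    apply Hlub in H0. lra. }
  set (cs := fun n => proj1_sig (constructive_indefinite_description _ (Happ n))).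
  assert (Hcs : forall n, C (cs n) /\ hnorm (hsub q (cs n)) ^ 2 < d2 + / INR (S n)).
  { intro n. unfold cs. destruct (constructive_indefinite_description _ (Happ n)); auto. }
  assert (Hcau : forall n k, hnorm (hsub (cs n) (cs k)) ^ 2 <= 2 * / INR (S n) + 2 * / INR (S k)).
  { intros n k. destruct (Hcs n) as [Cn Hn]. destruct (Hcs k) as [Ck Hk].
    set (mid := hadd (cs n) (hscal (1/2) (hsub (cs k) (cs n)))).
    assert (Cm : C mid) by (apply Hcv; auto; lra).
    apply Hlow in Cm.
    assert (hnorm (hsub (cs n) (cs k)) ^ 2 = 2 * hnorm (hsub q (cs n)) ^ 2
       + 2 * hnorm (hsub q (cs k)) ^ 2 - 4 * hnorm (hsub q mid) ^ 2).
    { unfold mid. rewrite !norm_sq. expand.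
      rewrite (hinner_sym X (cs k) (cs n)), (hinner_sym X (cs n) q), (hinner_sym X (cs k) q).
      field. }
    lra. }
  destruct (hcomplete X cs) as [l Hl].
  { intros eps Heps.
    destruct (archimed_cor1 (eps * eps / 4) ltac:(nra)) as [N [HN HN0]].
    exists N. intros n k Hn Hk.
    pose proof (inv_S_le N n HN0 Hn). pose proof (inv_S_le N k HN0 Hk).
    pose proof (Hcau n k).
    change (hnorm (hsub (cs n) (cs k)) < eps).
    pose proof (norm_nonneg (hsub (cs n) (cs k))).
    apply Rnot_le_lt. intro Hge. nra. }
  assert (Hl' : forall eps, eps > 0 -> exists N, forall n, (N <= n)%nat -> hnorm (hsub (cs n) l) < eps)
    by exact Hl.
  assert (Cl : C l) by (apply (Hcl cs l); [intro n; apply Hcs | exact Hl']).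
  exists l. split; auto.
  intros c Hc. apply Hlow in Hc.
  apply Rnot_lt_le. intro Hlt.
  set (a := hnorm (hsub q l)) in *. set (b := hnorm (hsub q c)) in *.
  assert (Hb0 : 0 <= b) by apply norm_nonneg.
  set (g := a - b).
  destruct (Hl' (g / 2) ltac:(unfold g; lra)) as [N1 HN1].
  destruct (archimed_cor1 (g * g / 4) ltac:(unfold g; nra)) as [N2 [HN2 HN20]].
  set (n := (N1 + N2)%nat).
  specialize (HN1 n ltac:(unfold n; lia)).
  pose proof (inv_S_le N2 n HN20 ltac:(unfold n; lia)).
  destruct (Hcs n) as [_ Hn].
  assert (Hqn : hnorm (hsub q (cs n)) < b + g / 2).
  { pose proof (norm_nonneg (hsub q (cs n))). apply Rnot_le_lt; intro. 
    assert ((b + g/2) ^ 2 <= hnorm (hsub q (cs n)) ^ 2) by (apply sq_le_of_le; unfold g in *; lra).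
    assert (0 <= b * g) by (apply Rmult_le_pos; unfold g; lra).
    assert ((b + g/2) ^ 2 = b^2 + b * g + g * g / 4) by (field).
    lra. }
  pose proof (tri q (cs n) l). unfold g, a, b in *. lra.
Qed.
End Ex.

Section Strip.
Context {X : HilbertSpace}.

Lemma strip_convex (u : X) al xi : convex (strip u al xi).
Proof.
  intros a b t Ha Hb Ht. unfold strip in *.
  apply abs_le_inv in Ha. apply abs_le_inv in Hb. apply Rabs_le.
  expand. 
  assert (E : hinner u a + t * (hinner u b + - hinner u a) - al
     = (1 - t) * (hinner u a - al) + t * (hinner u b - al)) by ring.
  rewrite E. split; nra.
Qed.

Lemma strip_closed (u : X) al xi : closed (strip u al xi).
Proof.
  intros s l Hs Hl. unfold strip in *.
  apply Rnot_lt_le. intro Hlt.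
  set (g := Rabs (hinner u l - al) - xi).
  pose proof (norm_nonneg u).
  destruct (Hl (g / (hnorm u + 1))) as [N HN].
  { apply Rdiv_lt_0_compat; unfold g; lra. }
  specialize (HN N (Nat.le_refl _)). specialize (Hs N).
  pose proof (cs u (hsub (s N) l)) as Hc.
  assert (E : hinner u (hsub (s N) l) = hinner u (s N) - hinner u l) by (expand; ring).
  rewrite E in Hc.
  assert (hnorm u * hnorm (hsub (s N) l) <= hnorm u * (g / (hnorm u + 1))) by
    (apply Rmult_le_compat_l; lra).
  assert (hnorm u * (g / (hnorm u + 1)) < g).
  { assert (hnorm u * (g / (hnorm u + 1)) = g - g / (hnorm u + 1)) by (field; lra).
    assert (0 < g / (hnorm u + 1)) by (apply Rdiv_lt_0_compat; unfold g; lra). lra. }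
  pose proof (Rabs_triang (hinner u (s N) - al) (hinner u l - hinner u (s N))) as H3.
  replace (hinner u (s N) - al + (hinner u l - hinner u (s N))) with (hinner u l - al) in H3 by ring.
  rewrite (Rabs_minus_sym (hinner u l) (hinner u (s N))) in H3.
  assert (Rabs (hinner u l - al) = g + xi) by (unfold g; ring). lra.
Qed.
End Strip.

Section Chain.
Context {X Y : HilbertSpace} (F : X -> Y) (Fadj : X -> Y -> X) (yd : Y)
  (delta eta : R) (lam : nat -> R) (x : nat -> X).

Lemma Hcap_convex l : convex (tgss_Hcap F Fadj yd delta eta lam x l).
Proof. intros a b t Ha Hb Ht i Hi. exact (strip_convex _ _ _ a b t (Ha i Hi) (Hb i Hi) Ht). Qed.

Lemma Hcap_closed l : closed (tgss_Hcap F Fadj yd delta eta lam x l).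
Proof. intros s p Hs Hp i Hi. exact (strip_closed _ _ _ s p (fun n => Hs n i Hi) Hp). Qed.

Lemma chain_exists (z : X) : forall rest pre p,
  (forall i, In i (pre ++ rest) -> tgss_H F Fadj yd delta eta lam x i z) ->
  exists out, tgss_chain F Fadj yd delta eta lam x pre rest p out.
Proof.
  induction rest as [|i rest IH]; intros pre p Hz.
  - exists p. reflexivity.
  - destruct (proj_exists (tgss_Hcap F Fadj yd delta eta lam x (pre ++ [i])) p)
      as [p' Hp'].
    + exists z. intros j Hj. apply Hz. apply in_app_or in Hj. apply in_or_app.
      destruct Hj as [Hj|[<-|[]]]; [left; auto | right; left; auto].
    + apply Hcap_convex.
    + apply Hcap_closed.
    + destruct (IH (pre ++ [i]) p') as [out Hout].
      { intros j Hj. apply Hz. rewrite <- app_assoc in Hj. exact Hj. }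
      exists out. simpl. exists p'. auto.
Qed.

Lemma chain_bound (z : X) : forall rest pre p out,
  (forall i, In i (pre ++ rest) -> tgss_H F Fadj yd delta eta lam x i z) ->
  tgss_chain F Fadj yd delta eta lam x pre rest p out ->
  hnorm (hsub z out) ^ 2 <= hnorm (hsub z p) ^ 2.
Proof.
  induction rest as [|i rest IH]; intros pre p out Hz Hc.
  - simpl in Hc. subst. lra.
  - simpl in Hc. destruct Hc as [p' [Hp' Hc]].
    assert (Hzc : tgss_Hcap F Fadj yd delta eta lam x (pre ++ [i]) z).
    { intros j Hj. apply Hz. apply in_app_or in Hj. apply in_or_app.
      destruct Hj as [Hj|[<-|[]]]; [left; auto | right; left; auto]. }
    pose proof (proj_vi _ _ _ _ (Hcap_convex _) Hp' Hzc).
    pose proof (IH (pre ++ [i]) p' out) as H2.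
    assert (hnorm (hsub z out) ^ 2 <= hnorm (hsub z p') ^ 2).
    { apply H2; auto. intros j Hj. apply Hz. rewrite <- app_assoc in Hj. exact Hj. }
    assert (0 <= hnorm (hsub p p') ^ 2) by (apply pow2_ge_0). lra.
Qed.
End Chain.

Lemma inner_subl {X : HilbertSpace} (a b c : X) : hinner (hsub a b) c = hinner a c - hinner b c.
Proof. unfold hsub. rewrite hinner_add, inner_oppl. ring. Qed.

Lemma norm_sub_sym {X : HilbertSpace} (a b : X) : hnorm (hsub a b) = hnorm (hsub b a).
Proof. unfold hnorm. f_equal. expand. rewrite (hinner_sym X b a). ring. Qed.

Lemma zin {X Y : HilbertSpace} (F : X -> Y) (F' : X -> X -> Y) (Fadj : X -> Y -> X)
  (yd y : Y) (delta eta : R) (lam : nat -> R) (x : nat -> X) (i : nat) (z : X)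
  (Hadj : is_adjoint (F' (tgss_z lam x i)) (Fadj (tgss_z lam x i)))
  (HA2 : hnorm (hsub (hsub (F (tgss_z lam x i)) (F z)) (F' (tgss_z lam x i) (hsub (tgss_z lam x i) z)))
       <= eta * hnorm (hsub (F (tgss_z lam x i)) (F z)))
  (Heta : 0 < eta) (Hyd : hnorm (hsub yd y) <= delta) (Fz : F z = y) :
  tgss_H F Fadj yd delta eta lam x i z.
Proof.
  unfold tgss_H, strip, tgss_alpha, tgss_xi, tgss_u, tgss_r.
  set (zi := tgss_z lam x i) in *.
  set (ri := hsub (F zi) yd).
  set (w := F' zi (hsub zi z)) in *.
  rewrite Fz in HA2.
  set (e := hsub (hsub (F zi) y) w) in *.
  pose proof (Hadj (hsub zi z) ri) as Ha. fold w in Ha.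
  assert (E : hinner (Fadj zi ri) z - (hinner (Fadj zi ri) zi - hnorm ri ^ 2)
     = hinner e ri + hinner (hsub y yd) ri).
  { rewrite norm_sq. rewrite inner_subl in Ha.
    rewrite (hinner_sym X zi), (hinner_sym X z) in Ha.
    unfold e. rewrite !inner_subl.
    assert (hinner ri ri = hinner (F zi) ri - hinner yd ri) by (unfold ri at 1; apply inner_subl). lra. }
  rewrite E.
  pose proof (cs e ri) as C1. pose proof (cs (hsub y yd) ri) as C2.
  rewrite norm_sub_sym in C2.
  pose proof (tri (F zi) yd y) as T. fold ri in T.
  pose proof (norm_nonneg ri). pose proof (norm_nonneg e).
  pose proof (norm_nonneg (hsub (F zi) y)).
  assert (hnorm e * hnorm ri <= eta * (hnorm ri + delta) * hnorm ri).
  { apply Rmult_le_compat_r; auto. apply Rle_trans with (1 := HA2).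
    apply Rmult_le_compat_l; lra. }
  assert (hnorm (hsub yd y) * hnorm ri <= delta * hnorm ri) by (apply Rmult_le_compat_r; auto).
  apply abs_le_inv in C1. apply abs_le_inv in C2. apply Rabs_le. nra.
Qed.
Theorem proposition3p6
  (X Y : HilbertSpace) (DF : X -> Prop) (F : X -> Y) (F' : X -> X -> Y)
  (Fadj : X -> Y -> X) (x0 : X) (rho eta cF : R) (y yd : Y) (delta : R)
  (K : nat) (lam : nat -> R) (I : nat -> list nat) (x : nat -> X) (k : nat)
  (* setting *)
  (HF : cont_frechet DF F F')
  (Hadj : forall p, DF p -> is_adjoint (F' p) (Fadj p))
  (Hrho : rho > 0)
  (Hdom : forall p, ball x0 (4 * rho) p -> DF p)
  (* (A1) *)
  (HA1 : exists xs, ball x0 rho xs /\ F xs = y)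
  (* (A2) *)
  (Heta : 0 < eta < 1)
  (HA2 : forall p q, ball x0 (4 * rho) p -> ball x0 (4 * rho) q ->
     hnorm (hsub (hsub (F p) (F q)) (F' p (hsub p q)))
       <= eta * hnorm (hsub (F p) (F q)))
  (* (A3) *)
  (HA3 : forall p, ball x0 (4 * rho) p ->
     (exists h, F' p h <> hzero) /\ (forall h, hnorm (F' p h) <= cF * hnorm h))
  (* noisy data *)
  (Hdelta : delta > 0)
  (Hyd : hnorm (hsub yd y) <= delta)
  (* TGSS iteration up to x_k *)
  (HK : (1 <= K)%nat)
  (Hx0 : x 0%nat = x0)
  (Hlam : forall j, 0 <= lam j <= 1)
  (Hlam0 : lam 0%nat = 0)
  (HI : forall j, admissible_index_set K j (I j))
  (Hiter : forall j, (j < k)%nat -> tgss_step F Fadj yd delta eta lam x I j (x (S j)))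
  (* assumption on the residual *)
  (Hres : hnorm (tgss_r F yd lam x k) > (1 + eta) / (1 - eta) * delta) :
  halfspace_gt (tgss_u F Fadj yd lam x k)
    (tgss_alpha F Fadj yd lam x k + tgss_xi F yd delta eta lam x k)
    (tgss_z lam x k)
  /\
  ((forall i, In i (I k) -> ball x0 (4 * rho) (tgss_z lam x i)) ->
   forall z, ball x0 (4 * rho) z -> F z = y ->
     tgss_u F Fadj yd lam x k <> hzero /\
     (exists xn, tgss_step F Fadj yd delta eta lam x I k xn) /\
     (forall xn, tgss_step F Fadj yd delta eta lam x I k xn ->
        hnorm (hsub z xn) ^ 2 <=
          hnorm (hsub z (tgss_z lam x k)) ^ 2 -
          (hnorm (tgss_r F yd lam x k) *
            (hnorm (tgss_r F yd lam x k) - delta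
               - eta * (hnorm (tgss_r F yd lam x k) + delta))
           / hnorm (tgss_u F Fadj yd lam x k)) ^ 2)).


Proof.
  set (N := hnorm (tgss_r F yd lam x k)) in *.
  assert (Hfac : (1 + eta) / (1 - eta) * (1 - eta) = 1 + eta) by (field; lra).
  assert (Hc0 : 0 < (1 + eta) / (1 - eta)) by (apply Rdiv_lt_0_compat; lra).
  assert (HN : N > 0) by nra.
  assert (Hgap : N - delta - eta * (N + delta) > 0).
  { assert (N * (1 - eta) > (1 + eta) / (1 - eta) * delta * (1 - eta)).
    { apply Rmult_gt_compat_r; lra. }
    nra. }
  assert (HNx : N ^ 2 > (delta + eta * (N + delta)) * N) by nra.
  split.
  { unfold halfspace_gt, tgss_alpha, tgss_xi. fold N. lra. }
  intros Hb z Hz Fz.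
  assert (zinH : forall i, In i (I k) -> tgss_H F Fadj yd delta eta lam x i z).
  { intros i Hi. apply (zin F F' Fadj yd y delta eta lam x i z
      (Hadj _ (Hdom _ (Hb i Hi))) (HA2 _ _ (Hb i Hi) Hz) (proj1 Heta) Hyd Fz). }
  destruct (HI k) as [Hhd _].
  destruct (I k) as [|k1 rest] eqn:EI; simpl in Hhd; [discriminate|].
  injection Hhd as ->.
  assert (Hk : tgss_H F Fadj yd delta eta lam x k z) by (apply zinH; left; auto).
  assert (Hu : tgss_u F Fadj yd lam x k <> hzero).
  { intro Hu. unfold tgss_H, strip, tgss_alpha, tgss_xi in Hk. fold N in Hk.
    rewrite Hu, !inner0l in Hk.
    replace (0 - (0 - N ^ 2)) with (N ^ 2) in Hk by ring.
    rewrite Rabs_right in Hk by nra. lra. }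
  assert (Hup : hnorm (tgss_u F Fadj yd lam x k) > 0).
  { unfold hnorm. apply sqrt_lt_R0. pose proof (hinner_pos X (tgss_u F Fadj yd lam x k)).
    destruct (Req_dec (hinner (tgss_u F Fadj yd lam x k) (tgss_u F Fadj yd lam x k)) 0) as [E|E].
    - apply (hinner_def X) in E. contradiction.
    - lra. }
  split; [exact Hu|split].
  - unfold tgss_step. try rewrite EI. apply (chain_exists F Fadj yd delta eta lam x z).
    intros i Hi. apply zinH. try rewrite EI. exact Hi.
  - intros xn Hs. unfold tgss_step in Hs. try rewrite EI in Hs.
    simpl in Hs. destruct Hs as [p1 [Hp1 Hc]].
    pose proof (chain_bound F Fadj yd delta eta lam x z rest [k] p1 xn) as Hcb.
    assert (hnorm (hsub z xn) ^ 2 <= hnorm (hsub z p1) ^ 2).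
    { apply Hcb; auto. }
    assert (Hzc : tgss_Hcap F Fadj yd delta eta lam x [k] z).
    { intros i [<-|[]]. exact Hk. }
    pose proof (proj_vi _ _ _ _ (Hcap_convex F Fadj yd delta eta lam x [k]) Hp1 Hzc) as Hvi.
    destruct Hp1 as [Hin _].
    specialize (Hin k (or_introl eq_refl)).
    unfold tgss_H, strip, tgss_alpha, tgss_xi in Hin. fold N in Hin.
    apply abs_le_inv in Hin.
    set (u := tgss_u F Fadj yd lam x k) in *.
    set (zk := tgss_z lam x k) in *.
    pose proof (cs u (hsub zk p1)) as C.
    assert (E : hinner u (hsub zk p1) = hinner u zk - hinner u p1) by (expand; ring).
    rewrite E in C. apply abs_le_inv in C.
    set (D := N * (N - delta - eta * (N + delta)) / hnorm u).
    assert (HD0 : 0 <= D) by (unfold D; apply Rlt_le, Rdiv_lt_0_compat; nra).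
    assert (HD : D <= hnorm (hsub zk p1)).
    { unfold D. apply (Rmult_le_reg_r (hnorm u)); auto.
      replace (N * (N - delta - eta * (N + delta)) / hnorm u * hnorm u)
        with (N * (N - delta - eta * (N + delta))) by (field; lra).
      nra. }
    apply sq_le_of_le in HD; auto.
    lra.
Qed.
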